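(* Let $k, m, s$ be positive integers with $m \geq 2$ and $s \leq k-2$, let $n = km$, let $B_1,\ldots,B_m$ be a partition of $[n]$ into blocks with $|B_i| = k$, choose $T_i \subset B_i$ with $|T_i| = s$ for each $i$, put $T = \bigcup_{i=1}^m T_i$, and let $\mathcal{F}$ be the union-closed family generated by $\{B_i \cup \{t\} : i \in [m],\ t \in T\}$. Then every member of $\mathcal{F}$ contains at least one block, and for each $j \in [m]$ the number $N_j$ of members of $\mathcal{F}$ containing exactly $j$ of the blocks $B_1,\ldots,B_m$ is $N_j = \binom{m}{j} 2^{(m-j)s}$; consequently $$|\mathcal{F}| = 2^{(m-1)s}\sum_{j=1}^m \binom{m}{j} 2^{-(j-1)s}.$$
   Context: $[n] = \{1,\ldots,n\}$. A family of sets is union-closed if it contains the union of any two of its members. The union-closed family generated by $\mathcal{G} \subset \mathcal{P}(X)$ is the smallest union-closed family of subsets of $X$ containing $\mathcal{G}$. *)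

(* Defs.v *)
From mathcomp Require Import all_boot all_order all_algebra.
Set Implicit Arguments. Unset Strict Implicit. Unset Printing Implicit Defensive.

Definition union_closed (T : finType) (F : {set {set T}}) : bool :=
  [forall A in F, forall B in F, (A :|: B) \in F].

Definition uc_generated (T : finType) (G : {set {set T}}) : {set {set T}} :=
  \bigcap_(F : {set {set T}} | union_closed F && (G \subset F)) F.

(* Main.v *)
Require Import Defs.
From mathcomp Require Import all_boot all_order all_algebra.
From mathcomp Require Import zify ring.
Import GRing.Theory Num.Theory.

Lemma card_bigcup_disj (I T : finType) (F : I -> {set T}) (A : {set I}) :
  (forall i j, i != j -> [disjoint F i & F j]) ->
  #|\bigcup_(i in A) F i| = \sum_(i in A) #|F i|.
Proof.
move=> dis; have [n] := ubnP #|A|; elim: n A => // n IH A leA.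
have [->|[a aA]] := set_0Vmem A; first by rewrite !big_set0 cards0.
rewrite -(setD1K aA) !big_setU1 ?setD11 //=.
have dj : [disjoint F a & \bigcup_(i in A :\ a) F i].
  apply/bigcup_disjointP => i; rewrite !inE => /andP[ia _].
  by apply: dis; rewrite eq_sym.
rewrite cardsU (disjoint_setI0 dj) cards0 subn0 IH //.
by rewrite (cardsD1 a A) aA in leA.
Qed.

Lemma big_union_in (T : finType) (F : {set {set T}}) (Ys : {set {set T}}) :
  union_closed F -> Ys \subset F ->
  (\bigcup_(Y in Ys) Y == set0) || (\bigcup_(Y in Ys) Y \in F).
Proof.
move=> /forallP uc sub.
apply: (big_ind (fun Z => (Z == set0) || (Z \in F))) => //.
- by rewrite eqxx.
- move=> X Y /orP[/eqP->|XF] /orP[/eqP->|YF]; rewrite ?set0U ?setU0 ?eqxx ?XF ?YF ?orbT //.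
  by move: (uc X); rewrite XF /= => /forallP /(_ Y); rewrite YF /= => ->; rewrite orbT.
- by move=> Y YY; rewrite (subsetP sub _ YY) orbT.
Qed.

Theorem mainTheorem2 (k m s : nat) (hk : 0 < k) (hm : 2 <= m) (hs0 : 0 < s)
    (hs : s <= k - 2)
    (B : 'I_m -> {set 'I_(k * m)})
    (hBcard : forall i, #|B i| = k)
    (hBdisj : forall i j, i != j -> [disjoint B i & B j])
    (hBcover : \bigcup_(i < m) B i = [set: 'I_(k * m)])
    (T : 'I_m -> {set 'I_(k * m)})
    (hTsub : forall i, T i \subset B i)
    (hTcard : forall i, #|T i| = s) :
  let Tall := \bigcup_(i < m) T i in
  let F := uc_generated [set B i :|: [set t] | i in [set: 'I_m], t in Tall] in
  (forall X, X \in F -> exists i, B i \subset X) /\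
  (forall j, 1 <= j <= m ->
     #|[set X in F | #|[set i | B i \subset X]| == j]| = 'C(m, j) * 2 ^ ((m - j) * s)) /\
  (#|F|%:R : rat) = (2 ^+ ((m - 1) * s) *
     \sum_(1 <= j < m.+1) 'C(m, j)%:R * 2 ^- ((j - 1) * s))%R.
Proof.
move=> Tall F.
have Bdis : forall i j x, x \in B i -> x \in B j -> i = j.
  move=> i j x xi xj; apply/eqP; apply: contraT => ne.
  by move: (disjointFr (hBdisj _ _ ne) xi); rewrite xj.
have TB : forall i x, x \in T i -> x \in B i by move=> i; apply/subsetP.
have TallB : forall i x, x \in Tall -> x \in B i -> x \in T i.
  by move=> i x /bigcupP[j _ xj] xi; rewrite (Bdis _ _ _ xi (TB _ _ xj)).
have TallI : forall i x, x \in T i -> x \in Tall.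
  by move=> i x xi; apply/bigcupP; exists i.
have Tne : forall i, exists t, t \in T i.
  by move=> i; apply/card_gt0P; rewrite hTcard.
have Bnsub : forall i, ~~ (B i \subset Tall).
  move=> i; apply/negP => sub.
  have : B i \subset T i by apply/subsetP => x xi; apply: TallB => //; apply: (subsetP sub).
  move/subset_leq_card; rewrite hBcard hTcard; lia.
set G := [set B i :|: [set t] | i in [set: 'I_m], t in Tall].
set P := fun X : {set 'I_(k * m)} => [exists i, B i \subset X] &&
   (X \subset \bigcup_(i | B i \subset X) B i :|: Tall).
have FE : F = [set X | P X].
  apply/setP => X; apply/idP/idP.
  - move/bigcapP; apply; apply/andP; split.
    + apply/forallP => Y; apply/implyP; rewrite inE => /andP[/existsP[i Bi] sY].
      apply/forallP => Z; apply/implyP; rewrite inE => /andP[_ sZ].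
      rewrite inE; apply/andP; split.
        by apply/existsP; exists i; apply: subset_trans Bi (subsetUl _ _).
      have mono : forall W : {set 'I_(k * m)}, W \subset Y :|: Z ->
          \bigcup_(i | B i \subset W) B i \subset \bigcup_(i | B i \subset Y :|: Z) B i.
        move=> W sW;  apply/bigcupsP => j Bj; apply: bigcup_sup.
        exact: subset_trans Bj sW.
      rewrite subUset; apply/andP; split.
        by apply: subset_trans sY _; apply: setSU; apply: mono; apply: subsetUl.
      by apply: subset_trans sZ _; apply: setSU; apply: mono; apply: subsetUr.
    + apply/subsetP => Y /imset2P[i t _ tT ->]; rewrite inE; apply/andP; split.
        by apply/existsP; exists i; apply: subsetUl.
      rewrite subUset; apply/andP; split.
        by apply: subset_trans (subsetUl _ Tall); apply: bigcup_sup; apply: subsetUl.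
      by rewrite sub1set inE tT orbT.
  - rewrite inE => XP; apply/bigcapP => F' /andP[ucF' GF'].
    case/andP: (XP) => /existsP[i0 Bi0] sX.
    have XE : X = \bigcup_(Y in [set Y in G | Y \subset X]) Y.
      apply/eqP; rewrite eqEsubset; apply/andP; split; last first.
        by apply/bigcupsP => Y; rewrite inE => /andP[_ ->].
      apply/subsetP => x xX; move: (subsetP sX x xX); rewrite inE.
      case/orP => [/bigcupP[i Bi xi]|xT].
        have [t tT] := Tne i.
        apply/bigcupP; exists (B i :|: [set t]); last by rewrite inE xi.
        rewrite inE; apply/andP; split.
          by apply/imset2P; exists i t => //; apply: TallI tT.
        by rewrite subUset Bi sub1set (subsetP Bi) // TB.
      apply/bigcupP; exists (B i0 :|: [set x]); last by rewrite !inE eqxx orbT.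
      rewrite inE; apply/andP; split; first by apply/imset2P; exists i0 x.
      by rewrite subUset Bi0 sub1set.
    have sub : [set Y in G | Y \subset X] \subset F'.
      by apply/subsetP => Y; rewrite inE => /andP[YG _]; apply: (subsetP GF').
    have := @big_union_in _ F' _ ucF' sub; rewrite -XE => /orP[/eqP X0|//].
    have [x xi] : exists x, x \in B i0 by apply/card_gt0P; rewrite hBcard.
    by move: (subsetP Bi0 x xi); rewrite X0 inE.
have part1 : forall X, X \in F -> exists i, B i \subset X.
  by move=> X; rewrite FE inE => /andP[/existsP[i Bi] _]; exists i.
have key : forall I : {set 'I_m}, I != set0 ->
    #|[set X | P X && ([set i | B i \subset X] == I)]| = 2 ^ ((m - #|I|) * s).
  move=> I In0.
  set BI := \bigcup_(i in I) B i; set UI := \bigcup_(i in ~: I) T i.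
  have dBU : forall x, x \in BI -> x \in UI -> False.
    move=> x /bigcupP[i iI xi] /bigcupP[j jI xj].
    have := Bdis _ _ _ xi (TB _ _ xj); move=> ij; subst j.
    by move: jI; rewrite inE iI.
  have UIT : UI \subset Tall.
    by apply/bigcupsP => i _; apply/subsetP => x; apply: TallI.
  have E : [set X | P X && ([set i | B i \subset X] == I)] =
           (fun S => BI :|: S) @: powerset UI.
    apply/setP => X; rewrite inE; apply/andP/imsetP.
    - case => XP /eqP blI.
      have BIX : BI \subset X by apply/bigcupsP => i iI; move: iI; rewrite -blI inE.
      exists (X :&: UI); first by rewrite powersetE subsetIr.
      apply/setP => x; rewrite !inE; apply/idP/idP.
      + move=> xX; case/andP: XP => _ sX; move: (subsetP sX x xX); rewrite inE; case/orP.
        * case/bigcupP => i Bi xi; apply/orP; left; apply/bigcupP; exists i => //.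
          by rewrite -blI inE.
        * move=> /bigcupP[i _ xi]; case iI: (i \in I).
            by apply/orP; left; apply/bigcupP; exists i => //; exact: TB.
          by apply/orP; right; rewrite xX /=; apply/bigcupP; exists i => //; rewrite inE iI.
      + by case/orP => [xB| /andP[//]]; exact: (subsetP BIX).
    - case => S; rewrite powersetE => SU ->.
      have [i0 i0I] : exists i0, i0 \in I by apply/set0Pn.
      have BIS : forall i, i \in I -> B i \subset BI :|: S.
        by move=> i iI; apply: subset_trans (subsetUl _ S); exact: (bigcup_sup i iI).
      have bl : [set i | B i \subset BI :|: S] = I.
        apply/setP => i; rewrite inE; apply/idP/idP; last exact: BIS.
        move=> sub; apply: contraT => iI; suff : B i \subset Tall by rewrite (negbTE (Bnsub i)).
        apply/subsetP => x xi; move: (subsetP sub x xi); rewrite inE; case/orP.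
          case/bigcupP => j jI xj; have ij := Bdis _ _ _ xi xj; subst j.
          by rewrite jI in iI.
        by move=> xS; exact: (subsetP UIT _ (subsetP SU _ xS)).
      split; last by rewrite bl.
      rewrite /P; apply/andP; split; first by apply/existsP; exists i0; apply: BIS.
      rewrite subUset; apply/andP; split.
        apply: subset_trans (subsetUl _ Tall); apply/bigcupsP => i iI.
        by apply: bigcup_sup; exact: BIS.
      by apply: subset_trans (subsetUr _ _); apply: subset_trans SU UIT.
  rewrite E card_in_imset ?card_powerset.
    rewrite (@card_bigcup_disj _ _ T); last first.
      move=> i j ij; apply: disjointWl (hTsub i) _; apply: disjointWr (hTsub j) _.
      exact: hBdisj.
    rewrite (eq_bigr (fun _ => s)) ?sum_nat_const // mulnC.
    rewrite mulnC; congr (2 ^ (_ * _)); apply/eqP; rewrite -(eqn_add2l #|I|) cardsC card_ord subnKC //; rewrite -[X in _ <= X]card_ord; exact: max_card.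
  move=> S1 S2; rewrite !powersetE => s1 s2 eq12.
  have rec : forall S : {set 'I_(k * m)}, S \subset UI -> S = (BI :|: S) :&: UI.
    move=> S sS; rewrite setIUl (setIidPl sS).
    have -> : BI :&: UI = set0.
      by apply/setP => x; rewrite !inE; apply/negP => /andP[a b]; apply: (dBU x).
    by rewrite set0U.
  by rewrite (rec _ s1) (rec _ s2) eq12.
have part2 : forall j, 1 <= j <= m ->
     #|[set X in F | #|[set i | B i \subset X]| == j]| = 'C(m, j) * 2 ^ ((m - j) * s).
  move=> j /andP[j1 jm].
  rewrite -sum1_card (partition_big (fun X : {set 'I_(k * m)} => [set i | B i \subset X])
     (fun I : {set 'I_m} => #|I| == j)); last by move=> X; rewrite inE => /andP[_].
  rewrite (eq_bigr (fun _ => 2 ^ ((m - j) * s))); last first.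
    move=> I /eqP cI; have In0 : I != set0 by rewrite -card_gt0 cI.
    rewrite -cI -(key I In0) -[RHS]sum1_card; apply: eq_bigl => X; rewrite !inE FE inE.
    by apply/andP/andP => [[/andP[pX _] e]|[pX e]]; split => //; rewrite pX /= (eqP e).
  rewrite (eq_bigl (fun I => I \in [set I : {set 'I_m} | #|I| == j])); last first.
    by move=> I; rewrite inE.
  by rewrite sum_nat_const card_draws card_ord mulnC.
have blm : forall X : {set 'I_(k * m)}, #|[set i | B i \subset X]| < m.+1.
  by move=> X; rewrite ltnS -[X in _ <= X]card_ord max_card.
have cardF : #|F| = \sum_(j < m) ('C(m, j.+1) * 2 ^ ((m - j.+1) * s)).
  rewrite -sum1_card (partition_big (fun X : {set 'I_(k * m)} => inord #|[set i | B i \subset X]| : 'I_m.+1)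
     xpredT) //.
  rewrite big_ord_recl /= big1; last first.
    move=> X /andP[XF /eqP X0]; case: (part1 X XF) => i Bi.
    have : 0 < #|[set i | B i \subset X]| by apply/card_gt0P; exists i; rewrite inE.
    by move: X0 => /(congr1 val) /=; rewrite inordK // => ->.
  rewrite add0n; apply: eq_bigr => j _; rewrite -part2; last first.
    by have := ltn_ord j; lia.
  rewrite -sum1_card; apply: eq_bigl => X; rewrite !inE -val_eqE /= inordK //.
split; first exact: part1.
split; first exact: part2.
rewrite cardF natr_sum big_add1 /= big_mkord mulr_sumr; apply: eq_bigr => i _.
rewrite natrM natrX subSS subn0.
have -> : ((m - 1) * s = (m - i.+1) * s + i * s)%N.
  by rewrite -mulnDl; congr (_ * _)%N; have := ltn_ord i; lia.
rewrite exprD.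
have h2 : (2 ^+ (i * s) : rat) != 0%R by rewrite expf_neq0 // pnatr_eq0.
field.
exact: h2.
Qed.
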